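(* Let $p>2$ be a prime, $P$ a finite $p$-group, and $M,N$ normal subgroups of $P$. Then (1) $\operatorname{pwh}_P([N,P])\le \operatorname{pwh}_P(N)$; (2) $\operatorname{pwh}_P(N^p)\le \operatorname{pwh}_P(N)$; (3) $\operatorname{pwh}_P(MN)\le \max\{\operatorname{pwh}_P(M),\operatorname{pwh}_P(N)\}$.
   Context: For a finite $p$-group $P$, a normal subgroup $N$ of $P$ is powerfully embedded in $P$ if $[N,P]\le N^p$ when $p$ is odd, and $[N,P]\le N^4$ when $p=2$ (here $N^{k}$ denotes the subgroup generated by all $k$-th powers of elements of $N$). An $\eta$-series of $P$ is an ascending series $1=N_0\le N_1\le N_2\le\cdots$ of normal subgroups of $P$ such that $N_{i+1}/N_i$ is powerfully embedded in $P/N_i$ for all $i$. For $N\trianglelefteq P$, the powerful height $\operatorname{pwh}_P(N)$ is the smallest $k$ such that there is an $\eta$-series with $N_k=N$. *)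

(* Defs.v *)
From mathcomp Require Import all_boot all_fingroup all_solvable.
Set Implicit Arguments. Unset Strict Implicit. Unset Printing Implicit Defensive.
Local Open Scope group_scope.

Definition pow_sub (gT : finGroupType) (N : {set gT}) (k : nat) : {set gT} :=
  <<[set x ^+ k | x in N]>>.

Definition pw_embedded (gT : finGroupType) (p : nat) (N P : {set gT}) : Prop :=
  N <| P /\ [~: N, P] \subset pow_sub N (if p == 2 then 4 else p).

Definition eta_series (gT : finGroupType) (p : nat) (P : {group gT})
  (s : nat -> {group gT}) : Prop :=
  s 0 = 1%G /\
  forall i, [/\ s i \subset s i.+1, s i <| P, s i.+1 <| P &
             pw_embedded p (s i.+1 / s i) (P / s i)].

(* "pwh_P(N) <= k" witnessed: some eta-series has N_k = N *)
Definition pwh_at (gT : finGroupType) (p : nat) (P N : {group gT}) (k : nat) : Prop :=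
  exists s : nat -> {group gT}, eta_series p P s /\ s k = N.

(* pwh_P(X) <= pwh_P(Y) for all heights realised by Y *)
Definition pwh_le (gT : finGroupType) (p : nat) (P X : {group gT}) (k : nat) : Prop :=
  exists2 j, j <= k & pwh_at p P X j.

(* Main.v *)
Require Import Defs.
From mathcomp Require Import all_boot all_fingroup all_solvable.
Set Implicit Arguments. Unset Strict Implicit. Unset Printing Implicit Defensive.
Local Open Scope group_scope.


Section Core.
Variables (gT : finGroupType) (p : nat).
Hypotheses (pr_p : prime p) (p_gt2 : 2 < p).

Lemma memX (A : {group gT}) x : x \in A -> x ^+ p \in pow_sub A p.
Proof. by move=> Ax; apply: mem_gen; apply/imsetP; exists x. Qed.

Lemma pow_sub_sub (A : {group gT}) : pow_sub A p \subset A.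
Proof. by rewrite gen_subG; apply/subsetP=> _ /imsetP[x Ax ->]; rewrite groupX. Qed.

Lemma dvd_bin2 : p %| 'C(p, 2).
Proof. by apply: prime_dvd_bin => //; rewrite ltnW. Qed.

Lemma core_elt (P A B K0 K : {group gT}) x g :
  K <| P -> A \subset P -> B \subset P -> K0 \subset K ->
  [~: A, P] \subset pow_sub A p * B ->
  [~: B, P] \subset K ->
  [~: [~: pow_sub A p, P], P] \subset K ->
  {in [~: A, P], forall c, c ^+ p \in K0} ->
  x \in A -> g \in P -> [~ x ^+ p, g] \in K.
Proof.
move=> /andP[sKP nKP] sAP sBP sK0K hA hB hX hc Ax Pg.
have Px := subsetP sAP x Ax.
have nK : forall y, y \in P -> y \in 'N(K) by move=> y Py; apply: (subsetP nKP).
set c := [~ x, g].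
have Ac : c \in [~: A, P] by apply: mem_commg.
have Pc : c \in P by rewrite groupR.
have /mulsgP[a b Ya Bb def_c] := subsetP hA c Ac.
have Pa : a \in P by apply: (subsetP sAP); apply: (subsetP (pow_sub_sub A)).
have Pb : b \in P by apply: (subsetP sBP).
have cz : forall h, h \in P -> commute (coset K [~ a, x]) (coset K h).
  move=> h Ph; apply/commgP; rewrite -morphR ?nK ?groupR //.
  by apply/eqP; apply: coset_id; apply: (subsetP hX); apply: mem_commg => //; apply: mem_commg.
have fcx : coset K [~ c, x] = coset K [~ a, x].
  rewrite def_c commMgJ morphM ?nK ?groupJ ?groupR //.
  have hbx : [~ b, x] \in K by apply: (subsetP hB); apply: mem_commg.
  rewrite /= (coset_id hbx) mulg1.
  by rewrite morphJ ?nK ?groupR //= /conjg (cz b Pb) mulKg.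
have cfc : commute (coset K c) [~ coset K c, coset K x].
  by rewrite -morphR ?nK //= fcx; apply: commute_sym; apply: cz.
have cfx : commute (coset K x) [~ coset K c, coset K x].
  by rewrite -morphR ?nK //= fcx; apply: commute_sym; apply: cz.
have fcp : coset K c ^+ p = 1.
  by rewrite -morphX ?nK //=; apply: coset_id; apply: (subsetP sK0K); apply: hc.
have Rp : [~ coset K c, coset K x] ^+ 'C(p, 2) = 1.
  case/dvdnP: dvd_bin2 => m ->; rewrite mulnC expgM -commXg // fcp comm1g.
  by rewrite expg1n.
have eq1 : (coset K x * coset K c) ^+ p = coset K x ^+ p by rewrite expMg_Rmul // fcp Rp !mulg1.
apply: coset_idr; first by rewrite nK // groupR // groupX.
rewrite morphR ?nK ?groupX // morphX ?nK //.
rewrite -morphM ?nK // -conjg_mulR morphJ ?nK //= -conjXg in eq1.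
by rewrite /= /commg eq1 mulVg.
Qed.

Lemma normalR' (P H : {group gT}) : H <| P -> [~: H, P] <| P.
Proof.
move=> nHP; apply/andP; split; first by rewrite comm_subG ?normal_sub.
exact: normsRr (subxx P).
Qed.

Lemma powE (A : {group gT}) : p.-group A -> pow_sub A p = 'Mho^1(A).
Proof. by move=> pA; rewrite (MhoE 1 pA) expn1. Qed.

Lemma pow_normal (P A : {group gT}) : p.-group P -> A <| P -> pow_sub A p <| P.
Proof.
move=> pP nAP; rewrite powE; last exact: pgroupS (normal_sub nAP) pP.
exact: char_normal_trans (Mho_char 1 A) nAP.
Qed.

Lemma nil_sub (P X K0 : {group gT}) :
  nilpotent P -> X <| P -> K0 <| P -> X \subset K0 <*> [~: X, P] -> X \subset K0.
Proof.
move=> nilP nXP nK0P sX.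
have nK0X : X \subset 'N(K0) := subset_trans (normal_sub nXP) (normal_norm nK0P).
have nK0P' : P \subset 'N(K0) := normal_norm nK0P.
rewrite -quotient_sub1 //.
have sXR : X / K0 \subset [~: X / K0, P / K0].
  rewrite -quotientR // -[[~: X, P] / K0]quotientYidl; first exact: quotientS.
  by rewrite comm_subG // (subset_trans (normal_sub nXP)).
case: (eqVneq (X / K0) 1) => [-> // | ntX'].
have := nil_comm_properl (quotient_nil K0 nilP) (quotientS K0 (normal_sub nXP)) ntX'.
move/(_ (P / K0)); rewrite subsetI subxx quotient_norms ?normal_norm //.
by move/(_ isT); rewrite properE sXR andbF.
Qed.

Lemma U_rel (P A B K0 : {group gT}) :
  p.-group P -> A <| P -> B <| P -> K0 <| P ->
  [~: A, P] \subset pow_sub A p * B ->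
  [~: B, P] \subset K0 ->
  {in [~: A, P], forall c, c ^+ p \in K0} ->
  [~: pow_sub A p, P] \subset K0.
Proof.
move=> pP nAP nBP nK0P hA hB hc.
have nYP := pow_normal pP nAP.
set Y := pow_sub A p in nYP hA *.
have nXP : [~: Y, P] <| P by apply: normalR'; rewrite /Y; exact: nYP.
pose K := (K0 <*> [~: [~: Y, P], P])%G.
have nKP : K <| P by apply: normalY => //; apply: normalR'.
apply: (nil_sub (pgroup_nil pP) nXP nK0P).
have nKP' := normal_norm nKP.
have nKY : Y \subset 'N(K) := subset_trans (normal_sub nYP) nKP'.
have hK0K : K0 \subset K by apply: joing_subl.
have hBK : [~: B, P] \subset K := subset_trans hB hK0K.
have hXK : [~: [~: Y, P], P] \subset K by apply: joing_subr.
rewrite -quotient_cents2 //.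
have sSN : [set x ^+ p | x in A] \subset 'N(K).
  by apply: subset_trans nKY; rewrite /Y /pow_sub subset_gen.
rewrite /Y /pow_sub quotient_gen // gen_subG quotient_cents2 //.
rewrite gen_subG; apply/subsetP => _ /imset2P[_ g /imsetP[x Ax ->] Pg ->].
apply: (@core_elt P A B K0 K) => //; [exact: normal_sub nAP | exact: normal_sub nBP].
Qed.
End Core.


Section Infra.
Variables (gT : finGroupType) (p : nat) (P : {group gT}).
Hypotheses (pr_p : prime p) (p_gt2 : 2 < p) (pP : p.-group P).

Definition stepc (A H : {group gT}) := [~: A, P] \subset pow_sub A p <*> H.

Lemma pow_mono (A B : {group gT}) : A \subset B -> pow_sub A p \subset pow_sub B p.
Proof. by move=> sAB; apply: genS; apply: imsetS. Qed.

Lemma joinM (Y H : {group gT}) : Y <| P -> H \subset P -> Y <*> H = Y * H.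
Proof.
move=> nYP sHP; rewrite norm_joinEr //.
exact: subset_trans sHP (normal_norm nYP).
Qed.

Lemma pow_quot (A H : {group gT}) : A \subset P -> A \subset 'N(H) ->
  pow_sub (A / H) p = pow_sub A p / H.
Proof.
move=> sAP nHA; have pA : p.-group A := pgroupS sAP pP.
rewrite !powE //; last exact: quotient_pgroup.
by rewrite /quotient morphim_Mho // subsetI subxx nHA.
Qed.

Lemma pwE (A H : {group gT}) : H <| P -> A <| P ->
  pw_embedded p (A / H) (P / H) <-> stepc A H.
Proof.
move=> nHP nAP.
have sAP := normal_sub nAP; have sHP := normal_sub nHP.
have nHP' := normal_norm nHP.
have nHA : A \subset 'N(H) := subset_trans sAP nHP'.
have p2 : (p == 2) = false by apply/negbTE; rewrite neq_ltn p_gt2 orbT.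
have nYP : pow_sub A p <| P by apply: pow_normal.
have eqc : ([~: A / H, P / H] \subset pow_sub (A / H) p) = stepc A H.
  rewrite -quotientR // pow_quot // quotientSK; last first.
    by rewrite comm_subG.
  rewrite /stepc joinM // normC //.
  exact: subset_trans sHP (normal_norm nYP).
rewrite /pw_embedded p2 eqc quotient_normal //; split; first by case.
by [].
Qed.

Lemma etaP (s : nat -> {group gT}) :
  eta_series p P s <->
  s 0 = 1%G /\ forall i, [/\ s i \subset s i.+1, s i <| P, s i.+1 <| P & stepc (s i.+1) (s i)].
Proof.
split=> [[s0 h] | [s0 h]]; split=> // i; have [h1 h2 h3 h4] := h i.
  by split => //; apply/(pwE h2 h3).
by split => //; apply/(pwE h2 h3).
Qed.


Definition eta2 (s : nat -> {group gT}) :=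
  s 0 = 1%G /\ forall i, [/\ s i \subset s i.+1, s i <| P, s i.+1 <| P & stepc (s i.+1) (s i)].

Lemma eta_mono s i j : eta2 s -> i <= j -> s i \subset s j.
Proof.
move=> [_ h]; elim: j => [|j IH]; first by rewrite leqn0 => /eqP ->.
rewrite leq_eqVlt => /orP[/eqP -> //|]; rewrite ltnS => /IH sij.
by apply: subset_trans sij _; case: (h j).
Qed.

Lemma eta_normal s i : eta2 s -> s i <| P.
Proof. by move=> [_ h]; case: (h i). Qed.

Lemma trunc s k : eta2 s -> eta2 (fun i => s (minn i k)).
Proof.
move=> [s0 h]; split; first by rewrite min0n.
move=> i; cbv beta; case: (boolP (i < k)) => [lt_ik | ]; last rewrite -leqNgt => le_ki.
  have -> : minn i k = i by apply/minn_idPl; exact: ltnW.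
  have -> : minn i.+1 k = i.+1 by apply/minn_idPl.
  exact: h.
have -> : minn i k = k by apply/minn_idPr.
have -> : minn i.+1 k = k by apply/minn_idPr; exact: leqW.
have nk : s k <| P by case: (h k).
split => //; rewrite /stepc.
apply: subset_trans (joing_subr _ _); rewrite commg_subl.
exact: normal_norm.
Qed.

Lemma mk_at T j (X : {group gT}) : eta2 T -> T j = X -> pwh_at p P X j.
Proof. by move=> hT hj; exists T; split => //; apply/etaP. Qed.

End Infra.


Section Main.
Variables (gT : finGroupType) (p : nat) (P : {group gT}).
Hypotheses (pr_p : prime p) (p_gt2 : 2 < p) (pP : p.-group P).

Lemma stepc_join (A1 A0 B1 B0 : {group gT}) :
  A1 <| P -> A0 <| P -> B1 <| P -> B0 <| P ->
  stepc p P A1 A0 -> stepc p P B1 B0 -> stepc p P (A1 <*> B1) (A0 <*> B0).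
Proof.
move=> nA1 nA0 nB1 nB0 hA hB; rewrite /stepc.
have nA1B1 : B1 \subset 'N(A1) := subset_trans (normal_sub nB1) (normal_norm nA1).
have hc : [~: A1 <*> B1, P] = [~: A1, P] * [~: B1, P].
  rewrite norm_joinEr // commMG //.
  exact: subset_trans (normal_sub nB1) (normal_norm (normalR' nA1)).
rewrite hc; set T := (pow_sub _ p <*> _).
have sA : pow_sub A1 p \subset T.
  apply: subset_trans (joing_subl _ _); apply: pow_mono.
  exact: joing_subl.
have sB : pow_sub B1 p \subset T.
  apply: subset_trans (joing_subl _ _); apply: pow_mono.
  exact: joing_subr.
have sA0 : A0 \subset T by apply: subset_trans (joing_subr _ _); apply: joing_subl.
have sB0 : B0 \subset T by apply: subset_trans (joing_subr _ _); apply: joing_subr.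
apply: mul_subG.
  by apply: subset_trans hA _; apply/joing_subP.
by apply: subset_trans hB _; apply/joing_subP.
Qed.

Lemma part3 (M N : {group gT}) kM kN :
  pwh_at p P M kM -> pwh_at p P N kN -> pwh_le p P (M <*> N)%G (maxn kM kN).
Proof.
case=> sM [/(etaP p_gt2 pP) hM eM]; case=> sN [/(etaP p_gt2 pP) hN eN].
have tM := trunc kM hM; have tN := trunc kN hN.
exists (maxn kM kN) => //.
pose T i := (sM (minn i kM) <*> sN (minn i kN))%G.
apply: (@mk_at _ p P p_gt2 pP T).
  split.
    rewrite /T !min0n; case: hM => -> _; case: hN => -> _.
    by apply: group_inj; rewrite /= joing1G.
  move=> i; rewrite /T.
  case: tM => _ /(_ i) [a1 a2 a3 a4]; case: tN => _ /(_ i) [b1 b2 b3 b4].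
  split.
  - apply/joing_subP; split; [exact: subset_trans a1 (joing_subl _ _) | exact: subset_trans b1 (joing_subr _ _)].
  - exact: normalY.
  - exact: normalY.
  exact: stepc_join.
rewrite /T.
have -> : minn (maxn kM kN) kM = kM by apply/minn_idPr; exact: leq_maxl.
have -> : minn (maxn kM kN) kN = kN by apply/minn_idPr; exact: leq_maxr.
by rewrite eM eN.
Qed.

Lemma comm_join (Y B : {group gT}) : Y <| P -> B <| P ->
  [~: Y <*> B, P] = [~: Y, P] * [~: B, P].
Proof.
move=> nY nB.
rewrite norm_joinEr ?commMG //.
  exact: subset_trans (normal_sub nB) (normal_norm (normalR' nY)).
exact: subset_trans (normal_sub nB) (normal_norm nY).
Qed.

Lemma part1 (N : {group gT}) k :
  pwh_at p P N k -> pwh_le p P [~: N, P]%G k.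
Proof.
case=> s [/(etaP p_gt2 pP) hs eN].
exists k => //.
pose T i := [~: s i, P]%G.
apply: (@mk_at _ p P p_gt2 pP T); last by rewrite /T eN.
split.
  rewrite /T; case: hs => -> _.
  by apply: group_inj; rewrite /= comm1G.
move=> i; rewrite /T.
case: hs => _ /(_ i) [a1 a2 a3 a4].
split; [exact: commSg | exact: normalR' | exact: normalR' |].
rewrite /stepc.
have nY : pow_sub (s i.+1) p <| P by apply: pow_normal.
have nK0 : pow_sub [~: s i.+1, P] p <*> [~: s i, P] <| P.
  by apply: normalY; [apply: pow_normal => //; apply: normalR' | apply: normalR'].
apply: subset_trans (commSg _ a4) _.
rewrite comm_join //; apply: mul_subG; last exact: joing_subr.
apply: (U_rel pr_p p_gt2 pP a3 a2 nK0).
- by rewrite -(@joinM _ P) // normal_sub.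
- exact: joing_subr.
- by move=> c Rc; apply: (subsetP (joing_subl _ _)); apply: memX.
Qed.

Lemma h3 (A B S : {group gT}) :
  A <| P -> B <| P -> S <| P ->
  [~: B, P] \subset S -> pow_sub B p \subset S ->
  [~: A, P] \subset pow_sub A p * B ->
  {in [~: A, P], forall c, c ^+ p \in pow_sub (pow_sub A p) p <*> S}.
Proof.
move=> nA nB nS hB hBp hA c Rc.
set K0 := (pow_sub (pow_sub A p) p <*> S)%G.
have nK0 : K0 <| P.
  by apply: normalY => //; do 2!apply: pow_normal => //.
have nK : forall y, y \in P -> y \in 'N(K0).
  by move=> y Py; apply: (subsetP (normal_norm nK0)).
have Pc : c \in P by apply: (subsetP (comm_subG (normal_sub nA) (subxx P))).
have /mulsgP[a b Ya Bb def_c] := subsetP hA c Rc.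
have Pa : a \in P.
  by apply: (subsetP (normal_sub nA)); apply: (subsetP (pow_sub_sub p A)).
have Pb : b \in P by apply: (subsetP (normal_sub nB)).
apply: coset_idr; first by rewrite nK // groupX.
have cab : commute (coset K0 a) (coset K0 b).
  apply/commgP; rewrite -morphR ?nK //=; apply/eqP; apply: coset_id.
  apply: (subsetP (joing_subr _ _)); apply: (subsetP hB).
  by rewrite commGC; apply: mem_commg.
rewrite morphX ?nK //= def_c morphM ?nK //= expgMn //.
rewrite -!morphX ?nK //= !coset_id ?mulg1 //.
  by apply: (subsetP (joing_subr _ _)); apply: (subsetP hBp); apply: memX.
by apply: (subsetP (joing_subl _ _)); apply: memX.
Qed.

Lemma part2 (N : {group gT}) k :
  pwh_at p P N k -> pwh_le p P (pow_sub N p)%G k.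
Proof.
case=> s0 [/(etaP p_gt2 pP) hs0 eN0].
have hs := trunc k hs0.
set s := (fun i => s0 (minn i k)) in hs.
have eN : s k = N by rewrite /s minnn.
have sN : forall i, s i \subset N.
  by move=> i; rewrite -eN0; apply: eta_mono hs0 _; apply: geq_minr.
have nsi : forall i, s i <| P by move=> i; apply: eta_normal hs.
have nN : N <| P by rewrite -eN.
have nNP : pow_sub N p <| P by apply: pow_normal.
pose S i := (pow_sub (s i) p <*> s i.-1)%G.
have nS : forall i, S i <| P.
  by move=> i; apply: normalY; [apply: pow_normal | ].
have commS : forall i, [~: s i, P] \subset S i.
  case=> [|j]; first by rewrite /s min0n; case: hs0 => -> _; rewrite comm1G sub1G.
  by case: hs => _ /(_ j) [].
exists k => //.
pose T i := ((pow_sub N p)%G :&: S i)%G.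
apply: (@mk_at _ p P p_gt2 pP T); last first.
  apply: group_inj; rewrite /= /T /=; apply/setIidPl.
  by rewrite /S /= eN joing_subl.
split.
  apply: group_inj; apply/trivgP; rewrite /T /=.
  apply: subset_trans (subsetIr _ _) _.
  have s00 : s 0 = 1%G by rewrite /s min0n; case: hs0.
  rewrite /S /= s00; apply/joing_subP; split => //.
  exact: pow_sub_sub.
move=> i.
have [_ /(_ i) [a1 a2 a3 a4]] := hs.
split.
- apply: setIS; apply/joing_subP; split.
    by apply: subset_trans (joing_subl _ _); apply: pow_mono.
  apply: subset_trans (joing_subr _ _).
  by apply: eta_mono hs _; apply: leq_pred.
- exact: normalI.
- exact: normalI.
rewrite /stepc.
set A := s i.+1; set B := s i.
set Ti := T i.+1.
have nTi : Ti <| P by apply: normalI.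
have nK0 : pow_sub (pow_sub A p) p <*> S i <| P.
  by apply: normalY => //; do 2!apply: pow_normal => //.
have nY : pow_sub A p <| P by apply: pow_normal.
have hAm : [~: A, P] \subset pow_sub A p * B by rewrite -(@joinM _ P) // normal_sub.
have h1 : [~: Ti, P] \subset pow_sub (pow_sub A p) p <*> S i.
  apply: subset_trans (commSg _ (subsetIr _ _)) _.
  rewrite /S /= comm_join //; apply: mul_subG.
    apply: (U_rel pr_p p_gt2 pP a3 a2 nK0 hAm).
      exact: subset_trans (commS i) (joing_subr _ _).
    by apply: (h3 a3 a2 (nS i) (commS i) _ hAm); apply: joing_subl.
  exact: subset_trans (commS i) (joing_subr _ _).
have h2 : [~: Ti, P] \subset pow_sub N p.
  apply: subset_trans (commSg _ (subsetIl _ _)) _.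
  by rewrite commg_subl normal_norm.
have sYT : pow_sub A p \subset Ti.
  rewrite /Ti /T /= subsetI joing_subl andbT.
  exact: pow_mono (sN _).
have nTp : pow_sub Ti p <| P by apply: pow_normal.
have sTN : pow_sub Ti p \subset pow_sub N p.
  by apply: subset_trans (pow_sub_sub p Ti) _; rewrite /Ti /T /= subsetIl.
have hJ : pow_sub Ti p <*> S i = pow_sub Ti p * S i.
  exact: (@joinM _ P _ _ nTp (normal_sub (nS i))).
have : [~: Ti, P] \subset (pow_sub Ti p * S i) :&: pow_sub N p.
  rewrite subsetI h2 andbT -hJ.
  apply: subset_trans h1 _; apply/joing_subP; split; last exact: joing_subr.
  apply: subset_trans (joing_subl _ _); exact: (@pow_mono _ p (pow_sub A p)%G Ti sYT).
rewrite -group_modl // => hfin; apply: subset_trans hfin _.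
apply: mul_subG; first exact: joing_subl.
by apply: subset_trans (joing_subr _ _); rewrite /T /= setIC.
Qed.
End Main.

Unset Implicit Arguments.

Theorem lemma2p1 (gT : finGroupType) (p : nat) (P M N : {group gT}) :
  prime p -> 2 < p -> p.-group P -> M <| P -> N <| P ->
  [/\ (forall k, pwh_at p P N k -> pwh_le p P [~: N, P]%G k),
      (forall k, pwh_at p P N k -> pwh_le p P (pow_sub N p)%G k) &
      (forall kM kN, pwh_at p P M kM -> pwh_at p P N kN ->
         pwh_le p P (M <*> N)%G (maxn kM kN))].
Proof.
move=> pr_p p_gt2 pP nM nN; split.
- by move=> k h; apply: (part1 pr_p p_gt2 pP h).
- by move=> k h; apply: (part2 pr_p p_gt2 pP h).
- by move=> kM kN hM hN; apply: (part3 p_gt2 pP hM hN).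
Qed.
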